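(* Fix an integer $d\geq 2$ and $\theta\in\mathbb{R}$, and let $w=\frac{e^{id\theta}-de^{i\theta}}{d+1}$ with $|w|<1$. Let $z_0$ be the Denjoy–Wolff point of $B_w(z)=\left(\frac{z-w}{1-\overline{w}z}\right)^d$. Then $z_0=e^{id\theta}$.
   Context: $\mathbb{D}$ denotes the open unit disk. By the Denjoy–Wolff theorem, a finite Blaschke product $B$ of degree at least $2$ has a unique point $z_0\in\overline{\mathbb{D}}$, its Denjoy–Wolff point, such that $B^n(z)\to z_0$ for every $z\in\mathbb{D}$. *)

(* Defs.v *)
From Stdlib Require Import Reals.
From Coquelicot Require Import Coquelicot.

Open Scope C_scope.

Definition expi (t : R) : C := (cos t, sin t).

Definition Bw (d : nat) (w : C) (z : C) : C :=
  Cpow ((z - w) / (1 - Cconj w * z)) d.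

Definition is_DW_point (f : C -> C) (z0 : C) : Prop :=
  (Cmod z0 <= 1)%R /\
  forall z : C, (Cmod z < 1)%R ->
    filterlim (fun n : nat => Nat.iter n f z) eventually (locally z0).

(* Main.v *)
Require Import Defs.
From Stdlib Require Import Reals Lra Psatz Classical.
From Coquelicot Require Import Coquelicot.

Section Helpers.
Local Open Scope R_scope.


Definition Nm (z : C) : R := fst z * fst z + snd z * snd z.
Definition ip (p q : C) : R := fst p * fst q + snd p * snd q.

Lemma Nm_ge0 z : 0 <= Nm z.
Proof. unfold Nm; nra. Qed.

Lemma Nm_mult a b : Nm (a * b)%C = Nm a * Nm b.
Proof. destruct a, b; unfold Nm; simpl; ring. Qed.

Lemma Nm_pow v n : Nm (Cpow v n) = Nm v ^ n.
Proof. induction n; simpl. unfold Nm; simpl; ring. rewrite Nm_mult, IHn; ring. Qed.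

Lemma Nm_div a b : Nm b <> 0 -> Nm (a / b)%C = Nm a / Nm b.
Proof. destruct a as [a1 a2], b as [b1 b2]; unfold Nm; simpl; intros H.
  field_simplify; try field; try nra. Qed.

Lemma Cmod_Nm z : Cmod z = sqrt (Nm z).
Proof. unfold Cmod, Nm; f_equal; ring. Qed.

Lemma Nm_Cmod z : Nm z = Cmod z ^ 2.
Proof. rewrite Cmod_Nm. rewrite pow2_sqrt; auto using Nm_ge0. Qed.

Lemma Nm_add a b : Nm (a + b)%C = Nm a + Nm b + 2 * ip a b.
Proof. destruct a, b; unfold Nm, ip; simpl; ring. Qed.

Lemma Nm_conj a : Nm (Cconj a) = Nm a.
Proof. destruct a; unfold Nm; simpl; ring. Qed.

Lemma Nm_zero z : Nm z = 0 -> z = 0%C.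
Proof. destruct z as [a b]; unfold Nm; simpl; intros H.
  assert (a = 0) by nra. assert (b = 0) by nra. subst; reflexivity. Qed.

Lemma Nm_one_minus_pos x : Nm x < 1 -> 0 < Nm (1 - x)%C.
Proof. destruct x as [a b]; unfold Nm; simpl; intros H. nra. Qed.

Lemma Nm_one_minus_le4 x : Nm x <= 1 -> Nm (1 - x)%C <= 4.
Proof. destruct x as [a b]; unfold Nm; simpl; intros H. nra. Qed.

Lemma Nm_one_minus_pos' x : Nm x <= 1 -> x <> 1%C -> 0 < Nm (1 - x)%C.
Proof. intros H1 H2. destruct (Nm_ge0 (1 - x)%C) as [h|h]; auto.
  exfalso; apply H2. symmetry in h. apply Nm_zero in h.
  replace x with (1 - (1 - x))%C by ring. rewrite h. ring. Qed.

Fixpoint Asum (v : C) (n : nat) : C :=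
  match n with O => 0%C | S k => (Asum v k + Cpow v k)%C end.
Fixpoint Ssum (t : R) (n : nat) : R :=
  match n with O => 0 | S k => Ssum t k + t ^ k end.

Lemma geomA v n : ((1 - v) * Asum v n = 1 - Cpow v n)%C.
Proof. induction n; simpl. ring.
  replace ((1 - v) * (Asum v n + Cpow v n))%C with ((1 - v) * Asum v n + (1-v) * Cpow v n)%C by ring.
  rewrite IHn. ring. Qed.

Lemma geomS t n : (1 - t) * Ssum t n = 1 - t ^ n.
Proof. induction n; simpl. ring.
  replace ((1 - t) * (Ssum t n + t ^ n)) with ((1 - t) * Ssum t n + (1-t) * t ^ n) by ring.
  rewrite IHn. ring. Qed.

Lemma P_nonneg v n x :
  0 <= Ssum (Nm v) n + INR n * Nm x - 2 * ip (Asum v n) x.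
Proof. induction n. simpl. unfold ip; simpl. lra.
  simpl Ssum; simpl Asum. rewrite S_INR.
  assert (E : Ssum (Nm v) n + Nm v ^ n + (INR n + 1) * Nm x - 2 * ip (Asum v n + Cpow v n) x
     = (Ssum (Nm v) n + INR n * Nm x - 2 * ip (Asum v n) x) + Nm (Cpow v n - x)%C).
  { rewrite <- Nm_pow. destruct (Asum v n), (Cpow v n), x; unfold Nm, ip; simpl; ring. }
  rewrite E. pose proof (Nm_ge0 (Cpow v n - x)%C). lra. Qed.

Definition Q v n := INR n * Ssum (Nm v) n - Nm (Asum v n).

Lemma Q_mono v n : Q v n <= Q v (S n).
Proof. unfold Q. simpl Ssum; simpl Asum. rewrite S_INR.
  pose proof (P_nonneg v n (Cpow v n)). rewrite Nm_add. rewrite <- Nm_pow.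
  unfold Nm, ip in *; nra. Qed.

Lemma Q_ge v n : (2 <= n)%nat -> Nm (1 - v)%C <= Q v n.
Proof. induction 1.
  - unfold Q; simpl. destruct v; unfold Nm; simpl; nra.
  - eapply Rle_trans; [exact IHle | apply Q_mono]. Qed.

Lemma pow_key v n : (2 <= n)%nat -> Nm v <= 1 ->
  INR n * (1 - Nm v ^ n) * Nm (1 - v)%C - Nm (1 - Cpow v n)%C * (1 - Nm v)
  >= (1 - Nm v) * Nm (1 - v)%C ^ 2.
Proof. intros Hn Hv.
  rewrite <- geomS, <- geomA, Nm_mult.
  pose proof (Q_ge v n Hn). unfold Q in H.
  pose proof (Nm_ge0 (1 - v)%C).
  assert (0 <= 1 - Nm v) by lra.
  assert (E: INR n * ((1 - Nm v) * Ssum (Nm v) n) * Nm (1 - v)%C -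
   Nm (1 - v)%C * Nm (Asum v n) * (1 - Nm v) = (1 - Nm v) * Nm (1-v)%C * (INR n * Ssum (Nm v) n - Nm (Asum v n))) by ring.
  rewrite E. apply Rle_ge. replace ((1 - Nm v) * Nm (1 - v)%C ^ 2) with ((1 - Nm v) * Nm (1 - v)%C * Nm (1-v)%C) by ring.
  apply Rmult_le_compat_l; [apply Rmult_le_pos|]; auto. Qed.

Lemma pow_le_one x n : 0 <= x -> x <= 1 -> x ^ n <= 1.
Proof. intros. induction n; simpl. lra. pose proof (pow_le x n H). nra. Qed.

Lemma pow_lt_one x n : 0 <= x -> x < 1 -> (1 <= n)%nat -> x ^ n < 1.
Proof. intros H1 H2 Hn. destruct n. lia. simpl.
  pose proof (pow_le_one x n H1 (Rlt_le _ _ H2)). pose proof (pow_le x n H1). nra. Qed.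

Lemma pow_bound v n : Cmod v <= 1 -> Cmod (1 - Cpow v n)%C <= INR n * Cmod (1 - v)%C.
Proof. intros Hv. induction n.
  - simpl. replace (1 - 1)%C with (RtoC 0) by ring. rewrite Cmod_0. lra.
  - change (Cpow v (S n)) with (v * Cpow v n)%C.
    replace (1 - v * Cpow v n)%C with ((1 - Cpow v n) + Cpow v n * (1 - v))%C by ring.
    eapply Rle_trans; [apply Cmod_triangle|]. rewrite Cmod_mult, Cmod_pow.
    rewrite S_INR.
    assert (Cmod v ^ n <= 1). { apply pow_le_one; auto. apply Cmod_ge_0. }
    pose proof (Cmod_ge_0 (1 - v)%C). nra. Qed.


Lemma Cpow_mult a b n : Cpow (a * b)%C n = (Cpow a n * Cpow b n)%C.
Proof. induction n; simpl. ring. rewrite IHn. ring. Qed.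

Lemma PL u y d : Nm u = 1 -> Nm y < 1 -> (2 <= d)%nat ->
  INR d * (1 - Nm y ^ d) * Nm (u - y)%C - Nm (Cpow u d - Cpow y d)%C * (1 - Nm y)
    >= (1 - Nm y) * Nm (u - y)%C ^ 2 /\
  Nm (Cpow u d - Cpow y d)%C <= INR d ^ 2 * Nm (u - y)%C.
Proof. intros Hu Hy Hd.
  set (v := (y * Cconj u)%C).
  assert (E1 : (u * v)%C = (y * RtoC (Nm u))%C).
  { unfold v; destruct u, y; unfold Nm; apply injective_projections; simpl; ring. }
  rewrite Hu in E1. replace (y * RtoC 1)%C with y in E1 by ring.
  rewrite <- E1.
  assert (Nv : Nm v = Nm y). { rewrite <- E1, Nm_mult, Hu; ring. }
  replace (u - u * v)%C with (u * (1 - v))%C by ring.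
  rewrite Cpow_mult.
  replace (Cpow u d - Cpow u d * Cpow v d)%C with (Cpow u d * (1 - Cpow v d))%C by ring.
  rewrite !Nm_mult, Nm_pow, !Hu, pow1, !Rmult_1_l. split.
  - apply pow_key; auto. lra.
  - rewrite !Nm_Cmod. assert (Cmod v <= 1).
    { assert (Cmod v ^ 2 <= 1) by (rewrite <- Nm_Cmod; lra).
      pose proof (Cmod_ge_0 v). nra. }
    pose proof (pow_bound v d H). pose proof (Cmod_ge_0 (1 - Cpow v d)%C).
    replace (INR d ^ 2 * Cmod (1 - v)%C ^ 2) with ((INR d * Cmod (1 - v)%C)^2) by ring.
    apply pow_incr; auto.
Qed.


Definition phi (w z : C) : C := ((z - w) / (1 - Cconj w * z))%C.

Lemma den_pos w z : Nm w < 1 -> Nm z <= 1 -> 0 < Nm (1 - Cconj w * z)%C.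
Proof. intros. apply Nm_one_minus_pos. rewrite Nm_mult, Nm_conj.
  pose proof (Nm_ge0 w). pose proof (Nm_ge0 z). nra. Qed.

Lemma phi_mod w z : Nm w < 1 -> Nm z < 1 ->
  1 - Nm (phi w z) = (1 - Nm w) * (1 - Nm z) / Nm (1 - Cconj w * z)%C.
Proof. intros Hw Hz. pose proof (den_pos w z Hw (Rlt_le _ _ Hz)).
  unfold phi. rewrite Nm_div by lra.
  assert (E: Nm (1 - Cconj w * z)%C - Nm (z - w)%C = (1 - Nm w) * (1 - Nm z)).
  { destruct w, z; unfold Nm; simpl; ring. }
  replace (1 - Nm (z - w)%C / Nm (1 - Cconj w * z)%C) with
    ((Nm (1 - Cconj w * z)%C - Nm (z - w)%C) / Nm (1 - Cconj w * z)%C) by (field; lra).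
  rewrite E. reflexivity. Qed.

Lemma phi_diff w a b : Nm w < 1 -> Nm a <= 1 -> Nm b < 1 ->
  Nm (phi w a - phi w b)%C = (1 - Nm w) ^ 2 * Nm (a - b)%C /
     (Nm (1 - Cconj w * a)%C * Nm (1 - Cconj w * b)%C).
Proof. intros Hw Ha Hb.
  pose proof (den_pos w a Hw Ha). pose proof (den_pos w b Hw (Rlt_le _ _ Hb)).
  assert (N1 : (1 - Cconj w * a)%C <> 0%C). { intro h; rewrite h in H; unfold Nm in H; simpl in H; lra. }
  assert (N2 : (1 - Cconj w * b)%C <> 0%C). { intro h; rewrite h in H0; unfold Nm in H0; simpl in H0; lra. }
  assert (Ew : (w * Cconj w)%C = RtoC (Nm w)). { destruct w; unfold Nm; apply injective_projections; simpl; ring. }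
  assert (E : (phi w a - phi w b)%C = (RtoC (1 - Nm w) * (a - b) / ((1 - Cconj w * a) * (1 - Cconj w * b)))%C).
  { unfold phi. rewrite RtoC_minus, <- Ew. field. split; auto. }
  rewrite E, Nm_div, !Nm_mult.
  - f_equal. unfold Nm at 1; simpl. ring.
  - rewrite Nm_mult. nra.
Qed.


Lemma Nm_expi t : Nm (expi t) = 1.
Proof. unfold Nm, expi; simpl. pose proof (sin2_cos2 t). unfold Rsqr in H. nra. Qed.

Lemma expi_pow d t : Cpow (expi t) d = expi (INR d * t).
Proof. induction d.
  - simpl. unfold expi. rewrite Rmult_0_l, cos_0, sin_0. reflexivity.
  - change (Cpow (expi t) (S d)) with (expi t * Cpow (expi t) d)%C. rewrite IHd.
    rewrite S_INR. replace ((INR d + 1) * t) with (INR d * t + t) by ring.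
    unfold expi. rewrite cos_plus, sin_plus. apply injective_projections; simpl; ring. Qed.

Lemma expi_neq0 t : expi t <> 0%C.
Proof. intro h. pose proof (Nm_expi t). rewrite h in H. unfold Nm in H; simpl in H. lra. Qed.

Lemma conj_expi t : Cconj (expi t) = (/ expi t)%C.
Proof. unfold expi, Cconj, Cinv; simpl. pose proof (sin2_cos2 t). unfold Rsqr in H.
  assert (E: cos t * (cos t * 1) + sin t * (sin t * 1) = 1) by nra. rewrite E.
  apply injective_projections; simpl; field. Qed.

Lemma Nm_RtoC x : RtoC (Nm x) = (x * Cconj x)%C.
Proof. destruct x; unfold Nm; apply injective_projections; simpl; ring. Qed.

Lemma RtoC_inj a b : RtoC a = RtoC b -> a = b.
Proof. intro h. apply (f_equal fst) in h. exact h. Qed.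

Lemma conj_w (p u : C) (D : R) : 0 < D ->
  Cconj ((p - RtoC D * u) / RtoC (D + 1))%C = ((Cconj p - RtoC D * Cconj u) / RtoC (D + 1))%C.
Proof. intros HD.
  destruct p as [p1 p2], u as [u1 u2]. unfold Cconj, Cdiv, Cinv, Cminus, Cmult, Copp, Cplus, RtoC; simpl.
  apply injective_projections; simpl; field; lra. Qed.

Lemma Cconj_lin a b : Cconj (1 - a * b)%C = (1 - Cconj a * Cconj b)%C.
Proof. destruct a, b; unfold Cconj; apply injective_projections; simpl; ring. Qed.

Lemma Cconj_conj a : Cconj (Cconj a) = a.
Proof. destruct a; unfold Cconj; apply injective_projections; simpl; ring. Qed.

Lemma K12 (p u : C) (D : R) : 0 < D -> p <> 0%C -> u <> 0%C -> Nm p = 1 ->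
  Cconj p = (/ p)%C -> Cconj u = (/ u)%C ->
  let w := ((p - RtoC D * u) / RtoC (D + 1))%C in
  Nm w < 1 ->
  phi w p = u /\ Nm (1 - Cconj w * p)%C = D * (1 - Nm w).
Proof. intros HD Hp Hu Np Cp Cu w Hw.
  assert (Cw : Cconj w = ((/ p - RtoC D * / u) / RtoC (D + 1))%C).
  { unfold w. rewrite conj_w by auto. rewrite Cp, Cu. reflexivity. }
  assert (H1 : (RtoC D + 1)%C <> 0%C). { rewrite <- RtoC_plus. intro h. apply RtoC_inj in h. lra. }
  assert (Hn : (1 - Cconj w * p)%C <> 0%C).
  { pose proof (den_pos w p Hw (Req_le _ _ Np)). intro h; rewrite h in H; unfold Nm in H; simpl in H; lra. }
  rewrite RtoC_plus in Cw.
  split.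
  - unfold phi.
    assert (Hpw : (p - w = u * (1 - Cconj w * p))%C).
    { rewrite Cw. unfold w. rewrite RtoC_plus. field. auto. }
    rewrite Hpw. field. auto.
  - apply RtoC_inj. rewrite RtoC_mult, RtoC_minus, !Nm_RtoC, Cconj_lin, Cconj_conj, Cw.
    rewrite Cp. unfold w. rewrite RtoC_plus. field. auto.
Qed.


Lemma real_step (D m A P Dz Y E F G : R) : 0 < D -> 0 < m -> 0 < A -> 0 < P -> 0 < Dz -> Dz <= 4 -> 0 < F ->
  Y = m * A / Dz -> E = m ^ 2 * P / (D * m * Dz) ->
  D * G * E - F * Y >= Y * E ^ 2 -> F <= D ^ 2 * E ->
  G / F >= A / P + m * A / (4 * D ^ 3).
Proof. intros HD Hm HA HP HDz HDz4 HF HY HE Ha Hb.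
  assert (HYp : 0 < Y) by (rewrite HY; apply Rdiv_lt_0_compat; [apply Rmult_lt_0_compat|]; lra).
  assert (HEp : 0 < E) by (rewrite HE; apply Rdiv_lt_0_compat; [apply Rmult_lt_0_compat; [apply pow_lt|]|apply Rmult_lt_0_compat; [apply Rmult_lt_0_compat|]]; lra).
  assert (s1 : G >= (F * Y + Y * E ^ 2) / (D * E)).
  { apply Rle_ge. apply Rle_div_l; [apply Rmult_lt_0_compat; lra | nra]. }
  assert (s2 : G / F >= Y / (D * E) + Y * E / (D * F)).
  { apply Rle_ge. apply (Rle_trans _ ((F * Y + Y * E ^ 2) / (D * E) / F)).
    - right. field. repeat split; lra.
    - unfold Rdiv at 2. apply Rmult_le_compat_r. left; apply Rinv_0_lt_compat; lra. lra. }
  assert (s3 : Y * E / (D * F) >= Y / D ^ 3).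
  { assert (Ee : Y * E / (D * F) - Y / D ^ 3 = Y * (D^2*E - F) * / (D^3 * F)) by (field; lra).
    assert (0 <= Y * (D^2*E - F) * / (D^3 * F)).
    { apply Rmult_le_pos; [nra|]. left; apply Rinv_0_lt_compat. apply Rmult_lt_0_compat; [apply pow_lt|]; lra. }
    lra. }
  assert (s4 : Y / (D * E) = A / P).
  { rewrite HY, HE. field. repeat split; lra. }
  assert (s5 : Y / D ^ 3 >= m * A / (4 * D ^ 3)).
  { rewrite HY. apply Rle_ge. unfold Rdiv. rewrite Rinv_mult.
    assert (0 < / D ^ 3) by (apply Rinv_0_lt_compat; apply pow_lt; lra).
    assert (/ 4 <= / Dz) by (apply Rinv_le_contravar; lra).
    assert (0 <= m * A) by nra.
    assert (0 <= (m * A * / D ^ 3) * (/ Dz - / 4)) by (apply Rmult_le_pos; nra).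
    lra. }
  lra.
Qed.

Definition gfun (p z : C) : R := (1 - Nm z) / Nm (p - z)%C.

Lemma neq_pos (p z : C) : Nm p = 1 -> Nm z < 1 -> 0 < Nm (p - z)%C.
Proof. intros Hp Hz. destruct (Nm_ge0 (p - z)%C) as [h|h]; auto.
  symmetry in h. apply Nm_zero in h. replace z with p in Hz. lra.
  replace z with (p - (p - z))%C by ring. rewrite h. ring. Qed.

Lemma step (d : nat) (p u w z : C) : (2 <= d)%nat -> Nm p = 1 -> Nm u = 1 -> Cpow u d = p ->
  Nm w < 1 -> phi w p = u -> Nm (1 - Cconj w * p)%C = INR d * (1 - Nm w) ->
  Nm z < 1 ->
  Nm (Cpow (phi w z) d) < 1 /\
  gfun p (Cpow (phi w z) d) >= gfun p z + (1 - Nm w) * (1 - Nm z) / (4 * INR d ^ 3).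
Proof. intros Hd Hp Hu Hup Hw Hpu HK Hz.
  set (y := phi w z).
  assert (HD : 0 < INR d) by (apply lt_0_INR; lia).
  assert (Hm : 0 < 1 - Nm w) by lra.
  assert (HDz : 0 < Nm (1 - Cconj w * z)%C) by (apply den_pos; lra).
  assert (HDz4 : Nm (1 - Cconj w * z)%C <= 4).
  { apply Nm_one_minus_le4. rewrite Nm_mult, Nm_conj. pose proof (Nm_ge0 w); pose proof (Nm_ge0 z). nra. }
  pose proof (phi_mod w z Hw Hz) as HY. fold y in HY.
  assert (HA : 0 < 1 - Nm z) by lra.
  assert (Hy : Nm y < 1).
  { assert (0 < (1 - Nm w) * (1 - Nm z) / Nm (1 - Cconj w * z)%C).
    { apply Rdiv_lt_0_compat; [apply Rmult_lt_0_compat|]; lra. } lra. }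
  pose proof (phi_diff w p z Hw (Req_le _ _ Hp) Hz) as HE. rewrite Hpu, HK in HE. fold y in HE.
  destruct (PL u y d Hu Hy Hd) as [Ha Hb]. rewrite Hup in Ha, Hb.
  assert (Hyd : Nm (Cpow y d) < 1). { rewrite Nm_pow. apply pow_lt_one; auto. apply Nm_ge0. lia. }
  split; auto.
  unfold gfun. rewrite (Nm_pow y d).
  apply (real_step (INR d) (1 - Nm w) (1 - Nm z) (Nm (p - z)%C) (Nm (1 - Cconj w * z)%C)
     (1 - Nm y) (Nm (u - y)%C) (Nm (p - Cpow y d)%C) (1 - Nm y ^ d)); auto.
  - apply neq_pos; auto.
  - apply neq_pos; auto.
Qed.


Lemma dist_bound (p z : C) : Nm p = 1 -> Nm z < 1 -> Cmod (p - z)%C * gfun p z <= 2.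
Proof. intros Hp Hz. unfold gfun.
  pose proof (neq_pos p z Hp Hz) as HP.
  rewrite (Nm_Cmod (p - z)%C) in HP |- *. rewrite (Nm_Cmod z) in Hz |- *.
  assert (Cmod p = 1). { rewrite Cmod_Nm, Hp. apply sqrt_1. }
  assert (Cmod p <= Cmod (p - z)%C + Cmod z).
  { replace p with ((p - z) + z)%C at 1 by ring. apply Cmod_triangle. }
  pose proof (Cmod_ge_0 z). pose proof (Cmod_ge_0 (p - z)%C).
  set (r := Cmod (p - z)%C) in *. set (s := Cmod z) in *.
  assert (0 < r) by nra.
  replace (r * ((1 - s ^ 2) / r ^ 2)) with ((1 - s^2) / r) by (field; lra).
  apply Rle_div_l; [lra|]. nra. Qed.

Lemma conv (p : C) (z : nat -> C) (c : R) : Nm p = 1 -> 0 < c ->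
  (forall n, Nm (z n) < 1) ->
  (forall n, gfun p (z (S n)) >= gfun p (z n) + c * (1 - Nm (z n))) ->
  forall eps, 0 < eps -> exists N, forall n, (N <= n)%nat -> Cmod (z n - p)%C < eps.
Proof. intros Hp Hc Hz Hg eps He.
  set (g := fun n => gfun p (z n)).
  assert (gpos : forall n, 0 < g n).
  { intro n. unfold g, gfun. apply Rdiv_lt_0_compat. pose proof (Hz n); lra. apply neq_pos; auto. }
  assert (ginc : forall n, g n <= g (S n)).
  { intro n. unfold g. pose proof (Hg n). pose proof (Hz n). nra. }
  assert (gmono : forall n m, (n <= m)%nat -> g n <= g m).
  { intros n m Hnm. induction Hnm. lra. eapply Rle_trans; [exact IHHnm| apply ginc]. }
  assert (Hdist : forall n, Cmod (z n - p)%C * g n <= 2).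
  { intro n. replace (z n - p)%C with (- (p - z n))%C by ring. rewrite Cmod_opp. apply dist_bound; auto. }
  assert (Hdist2 : forall n, Nm (p - z n)%C * g 0%nat * c <= g (S n) - g n).
  { intro n. pose proof (Hg n). fold (g n) (g (S n)) in H.
    assert (E : Nm (p - z n)%C * g n = 1 - Nm (z n)).
    { unfold g, gfun. field. pose proof (neq_pos p (z n) Hp (Hz n)). lra. }
    pose proof (gmono 0%nat n (Nat.le_0_l n)). pose proof (Nm_ge0 (p - z n)%C).
    assert (Nm (p - z n)%C * g 0%nat <= Nm (p - z n)%C * g n) by (apply Rmult_le_compat_l; auto).
    assert (Nm (p - z n)%C * g 0%nat * c <= Nm (p - z n)%C * g n * c) by (apply Rmult_le_compat_r; lra).
    rewrite E in H3. lra. }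
  set (delta := c * g 0%nat * (eps ^ 2 / 2)).
  assert (Hdel : 0 < delta). { unfold delta. pose proof (gpos 0%nat). apply Rmult_lt_0_compat; [nra|]. nra. }
  destruct (classic (exists N, forall n, (N <= n)%nat -> g (S n) - g n < delta)) as [[N HN]|HN].
  - exists N. intros n Hn. pose proof (HN n Hn). pose proof (Hdist2 n).
    assert (Nm (p - z n)%C < eps ^ 2).
    { pose proof (gpos 0%nat). unfold delta in H.
      assert (0 < g 0%nat * c * eps ^ 2) by (apply Rmult_lt_0_compat; [apply Rmult_lt_0_compat|apply pow_lt]; lra).
      assert (Nm (p - z n)%C * (g 0%nat * c) < (eps ^ 2) * (g 0%nat * c)) by lra.
      apply (Rmult_lt_reg_r (g 0%nat * c)); [apply Rmult_lt_0_compat; lra | assumption]. }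
    rewrite Nm_Cmod in H1. replace (z n - p)%C with (- (p - z n))%C by ring. rewrite Cmod_opp.
    pose proof (Cmod_ge_0 (p - z n)%C). nra.
  - assert (Hk : forall k, exists N, g 0%nat + INR k * delta <= g N).
    { induction k.
      - exists 0%nat. simpl. lra.
      - destruct IHk as [N HN'].
        assert (exists n, (N <= n)%nat /\ g (S n) - g n >= delta).
        { apply NNPP. intro h. apply HN. exists N. intros n Hn. apply Rnot_le_lt. intro h2.
          apply h. exists n. split; auto. lra. }
        destruct H as [n [Hn Hj]]. exists (S n). rewrite S_INR.
        pose proof (gmono N n Hn). lra. }
    destruct (INR_unbounded (4 / eps / delta)) as [k Hk'].
    destruct (Hk k) as [N HN']. exists N. intros n Hn.
    pose proof (gmono N n Hn). pose proof (gpos 0%nat). pose proof (Hdist n).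
    assert (INR k * delta > 4 / eps).
    { apply Rlt_gt. apply (Rmult_lt_reg_r (/ delta)). apply Rinv_0_lt_compat; auto.
      replace (INR k * delta * / delta) with (INR k) by (field; lra). exact Hk'. }
    assert (g n > 4 / eps) by lra.
    assert (4 / eps * eps = 4) by (field; lra).
    pose proof (Cmod_ge_0 (z n - p)%C).
    pose proof (gpos n). apply Rnot_le_lt. intro hc.
    assert (eps * g n <= Cmod (z n - p)%C * g n) by (apply Rmult_le_compat_r; lra).
    assert (eps * (4 / eps) < eps * g n). apply Rmult_lt_compat_l; lra.
    lra.
Qed.

End Helpers.

Theorem corollary2p2 (d : nat) (theta : R) :
  (2 <= d)%nat ->
  let w : C := ((expi (INR d * theta) - RtoC (INR d) * expi theta)
                / RtoC (INR (d + 1)))%C in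
  (Cmod w < 1)%R ->
  is_DW_point (Bw d w) (expi (INR d * theta)) /\
  (forall z0 : C, is_DW_point (Bw d w) z0 -> z0 = expi (INR d * theta)).
Proof.
  intros Hd w Hw.
  set (D := INR d). set (p := expi (D * theta)). set (u := expi theta).
  assert (HD : (0 < D)%R) by (apply lt_0_INR; lia).
  assert (Hweq : w = ((p - RtoC D * u) / RtoC (D + 1))%C).
  { unfold w. rewrite plus_INR. reflexivity. }
  assert (HNw : (Nm w < 1)%R).
  { rewrite Nm_Cmod. pose proof (Cmod_ge_0 w). nra. }
  assert (Np : Nm p = 1%R) by apply Nm_expi.
  assert (Nu : Nm u = 1%R) by apply Nm_expi.
  assert (Hup : Cpow u d = p) by (unfold u, p, D; apply expi_pow).
  pose proof (K12 p u D HD (expi_neq0 _) (expi_neq0 _) Np (conj_expi _) (conj_expi _)) as HK.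
  cbv zeta in HK. rewrite <- Hweq in HK. destruct (HK HNw) as [K1 K2].
  assert (Hstep : forall z, (Nm z < 1)%R ->
     (Nm (Bw d w z) < 1)%R /\
     (gfun p (Bw d w z) >= gfun p z + ((1 - Nm w) / (4 * D ^ 3)) * (1 - Nm z))%R).
  { intros z Hz. destruct (step d p u w z Hd Np Nu Hup HNw K1 K2 Hz) as [S1 S2].
    split. exact S1. fold D in S2. unfold Bw. unfold phi in S2.
    replace ((1 - Nm w) / (4 * D ^ 3) * (1 - Nm z))%R with ((1 - Nm w) * (1 - Nm z) / (4 * D ^ 3))%R
      by (field; lra). exact S2. }
  assert (Hconv : forall z, (Cmod z < 1)%R ->
     filterlim (fun n : nat => Nat.iter n (Bw d w) z) eventually (locally p)).
  { intros z Hz.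
    assert (Hz' : (Nm z < 1)%R). { rewrite Nm_Cmod. pose proof (Cmod_ge_0 z). nra. }
    set (zs := fun n => Nat.iter n (Bw d w) z).
    assert (Hin : forall n, (Nm (zs n) < 1)%R).
    { induction n. exact Hz'. simpl. apply (Hstep _ IHn). }
    apply filterlim_locally. intros eps.
    assert (Hc : (0 < (1 - Nm w) / (4 * D ^ 3))%R).
    { apply Rdiv_lt_0_compat. lra. pose proof (pow_lt D 3 HD). lra. }
    destruct (conv p zs _ Np Hc Hin (fun n => proj2 (Hstep _ (Hin n))) eps (cond_pos eps)) as [N HN].
    exists N. intros n Hn. apply (norm_compat1 (V := C_NormedModule)). apply HN. exact Hn. }
  split.
  - split.
    + rewrite Cmod_Nm. fold D p. rewrite Np, sqrt_1. lra.
    + exact Hconv.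
  - intros z0 [_ H0].
    assert (H00 : (Cmod 0 < 1)%R) by (rewrite Cmod_0; lra).
    apply (filterlim_locally_unique (F := eventually) (fun n : nat => Nat.iter n (Bw d w) 0%C)).
    + apply H0. exact H00.
    + apply Hconv. exact H00.
Qed.
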